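(* Let $a_0=0$ and let $a_1<a_2<\cdots$ be the increasing enumeration of $\{m\ge1:\ c_m=1\}$. Then $$\{a_n-a_{n-1}:\ n\ge 1\}=\left\{\tfrac13(4^m-1):\ m\ge 1\right\}.$$ Moreover, for $n\ge1$, $a_n-a_{n-1}=1$ if and only if $n\equiv 0,1,2\pmod 4$; and for each $m\ge 2$, $a_n-a_{n-1}=\tfrac13(4^m-1)$ if and only if $n=2^{m+1}k+2^m-1$ for some integer $k\ge 0$.
   Context: For $n\in\mathbb{N}$ let $s_2(n)$ be the sum of the binary digits of $n$ and $t_n=s_2(n)\bmod 2$ (the Prouhet–Thue–Morse sequence). Let $F(X)=\sum_{n\ge1}t_nX^n\in\mathbb{F}_2[[X]]$ and let $G(X)=\sum_{n\ge1}c_nX^n\in\mathbb{F}_2[[X]]$ be its compositional inverse, i.e. $F(G(X))=G(F(X))=X$. The $c_n$ are identified with integers in $\{0,1\}$. *)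

(* Defs.v *)
From HB Require Import structures.
From mathcomp Require Import all_boot all_order all_algebra.
Set Implicit Arguments. Unset Strict Implicit. Unset Printing Implicit Defensive.
Import GRing.Theory.
Local Open Scope ring_scope.

Definition series := nat -> 'F_2.

(* sum of binary digits of n (bits of index >= n vanish since 2^n > n) *)
Definition s2 (n : nat) : nat := (\sum_(i < n) ((n %/ 2 ^ i) %% 2))%N.

Definition tm (n : nat) : nat := (s2 n %% 2)%N.

Definition Fser : series := fun n => if n == 0%N then 0 else (tm n)%:R.

Definition trunc (n : nat) (g : series) : {poly 'F_2} := \poly_(i < n.+1) g i.

(* Composition f(g(X)) for g with zero constant term: the coefficient of X^n
   only involves f_k for k <= n and g truncated at degree n. *)
Definition comp (f g : series) : series :=
  fun n => (\sum_(k < n.+1) f k *: (trunc n g) ^+ k)`_n.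

Definition Xser : series := fun n => if n == 1%N then 1 else 0.

Definition comp_inverse (f g : series) : Prop :=
  g 0%N = 0 /\ (forall n, comp f g n = Xser n) /\ (forall n, comp g f n = Xser n).

Definition enumerates (c : series) (a : nat -> nat) : Prop :=
  a 0%N = 0%N /\ (forall n, (a n < a n.+1)%N) /\
  (forall m, (1 <= m)%N -> (c m = 1 <-> exists2 n, (1 <= n)%N & a n = m)).

(* Main.v *)
Require Import Defs.
From HB Require Import structures.
From mathcomp Require Import all_boot all_order all_algebra.
From mathcomp Require Import zify ring.
Import GRing.Theory.

Open Scope ring_scope.

Lemma F2_cases (x : 'F_2) : x = 0 \/ x = 1.
Proof. case: x => [[|[|]]] //= H. by left; apply/val_inj. by right; apply/val_inj. Qed.

Lemma F2_two : (2%:R : 'F_2) = 0. Proof. by apply/eqP. Qed.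
Lemma F2_xx (x : 'F_2) : x + x = 0. Proof. by case: (F2_cases x) => ->; apply/eqP. Qed.
Lemma F2_sq (x : 'F_2) : x * x = x. Proof. by case: (F2_cases x) => ->; apply/eqP. Qed.
Lemma F2_10 : (1 : 'F_2) != 0. Proof. by apply/eqP. Qed.
Lemma P2_two : (2%:R : {poly 'F_2}) = 0. Proof. by rewrite -polyC_natr F2_two. Qed.

Lemma F2_mod2 (n : nat) : ((n %% 2)%N%:R : 'F_2) = n%:R.
Proof.
by rewrite {2}(divn_eq n 2) natrD natrM F2_two mulr0 add0r.
Qed.

Definition cong (N : nat) (p q : {poly 'F_2}) := forall i, (i <= N)%N -> p`_i = q`_i.

Lemma cong_refl N p : cong N p p. Proof. by []. Qed.
Lemma cong_sym N p q : cong N p q -> cong N q p. Proof. by move=> H i Hi; rewrite H. Qed.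
Lemma cong_trans N p q r : cong N p q -> cong N q r -> cong N p r.
Proof. by move=> H1 H2 i Hi; rewrite H1 ?H2. Qed.
Lemma congD N p q p' q' : cong N p p' -> cong N q q' -> cong N (p + q) (p' + q').
Proof. by move=> H1 H2 i Hi; rewrite !coefD H1 ?H2. Qed.
Lemma congM N p q p' q' : cong N p p' -> cong N q q' -> cong N (p * q) (p' * q').
Proof.
move=> H1 H2 i Hi; rewrite !coefM; apply: eq_bigr => j _.
have Hj : (j <= N)%N by apply: leq_trans Hi; rewrite -ltnS.
rewrite H1 ?H2 //; apply: leq_trans Hi; exact: leq_subr.
Qed.
Lemma congX N p p' k : cong N p p' -> cong N (p ^+ k) (p' ^+ k).
Proof.
move=> H; elim: k => [|k IH]; first exact: cong_refl.
by rewrite !exprS; apply: congM.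
Qed.

Lemma exp_low (q : {poly 'F_2}) k i : q`_0 = 0 -> (i < k)%N -> (q ^+ k)`_i = 0.
Proof.
move=> q0; elim: k i => [|k IH] i //= Hi.
rewrite exprSr coefM big1 // => j _.
have [jk|kj] := ltnP j k; first by rewrite IH ?mul0r.
have -> : (i - j = 0)%N by lia.
by rewrite q0 mulr0.
Qed.

Lemma cong0_comp N (r q : {poly 'F_2}) : q`_0 = 0 -> cong N r 0 -> cong N (r \Po q) 0.
Proof.
move=> q0 Hr i Hi; rewrite comp_polyE coef_sum coef0 big1 // => j _.
rewrite coefZ.
have [jN|Nj] := leqP j N; first by rewrite Hr // coef0 mul0r.
rewrite exp_low ?mulr0 //; exact: leq_ltn_trans Hi Nj.
Qed.

Lemma cong_sub N p q : cong N p q <-> cong N (p - q) 0.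
Proof.
split=> H i Hi; move: (H i Hi); rewrite coefB coef0; first by move->; rewrite subrr.
by move/eqP; rewrite subr_eq0 => /eqP.
Qed.

Lemma cong_comp_l N (p p' q : {poly 'F_2}) : q`_0 = 0 -> cong N p p' -> cong N (p \Po q) (p' \Po q).
Proof.
move=> q0 /cong_sub H; apply/cong_sub; rewrite -comp_polyB; exact: cong0_comp.
Qed.

Lemma cong_comp_r N (p q q' : {poly 'F_2}) : cong N q q' -> cong N (p \Po q) (p \Po q').
Proof.
move=> H i Hi; rewrite !comp_polyE !coef_sum; apply: eq_bigr => j _.
by rewrite !coefZ (@congX N q q' j H i Hi).
Qed.

Lemma comp_exp (p q : {poly 'F_2}) k : (p ^+ k) \Po q = (p \Po q) ^+ k.
Proof.
elim: k => [|k IH]; first by rewrite !expr0 -polyC1 comp_polyC.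
by rewrite !exprS comp_polyM IH.
Qed.

Lemma trunc_comp n (f : series) (q : {poly 'F_2}) : trunc n f \Po q = \sum_(k < n.+1) f k *: q ^+ k.
Proof.
rewrite /trunc poly_def raddf_sum; apply: eq_bigr => k _.
by change ((f k *: 'X^k) \Po q = f k *: q ^+ k); rewrite comp_polyZ comp_exp comp_polyX.
Qed.

Lemma compE (f g : series) n : Defs.comp f g n = ((trunc n f) \Po (trunc n g))`_n.
Proof. by rewrite /Defs.comp trunc_comp. Qed.

Lemma coef_trunc n (g : series) i : (trunc n g)`_i = if (i <= n)%N then g i else 0.
Proof. by rewrite /trunc coef_poly ltnS. Qed.

Lemma cong_trunc n N (g : series) : (n <= N)%N -> cong n (trunc n g) (trunc N g).
Proof.
move=> nN i Hi; rewrite !coef_trunc Hi; suff -> : (i <= N)%N by [].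
exact: leq_trans nN.
Qed.

Lemma sqr_coef_oh (p : {poly 'F_2}) i :
  (p ^+ 2)`_i = if odd i then 0 else p`_(i./2).
Proof.
elim/poly_ind: p i => [|q c IH] i; first by rewrite expr0n /= !coef0; case: ifP.
have -> : (q * 'X + c%:P) ^+ 2 = q ^+ 2 * 'X ^+ 2 + (c * c)%:P.
  rewrite polyCM; have := P2_two => H2.
  transitivity (q ^+ 2 * 'X ^+ 2 + c%:P * c%:P + 2%:R * (q * 'X * c%:P)); last first.
    by rewrite H2 mul0r addr0.
  ring.
rewrite F2_sq coefD coefMXn coefC coefD coefMX coefC.
case: i => [|[|j]] /=; first by rewrite add0r.
  by rewrite !addr0.
rewrite subn2 /= IH addr0.
case: (odd j) => //=.
by rewrite addr0.
Qed.

Lemma sqr_coef (p : {poly 'F_2}) i :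
  (p ^+ 2)`_i = if (i %% 2 == 0)%N then p`_(i %/ 2) else 0.
Proof.
rewrite sqr_coef_oh modn2 divn2; by case: (odd i).
Qed.

Lemma quad_coef (p : {poly 'F_2}) i :
  (p ^+ 4)`_i = if (i %% 4 == 0)%N then p`_(i %/ 4) else 0.
Proof.
rewrite (_ : 4%N = (2 * 2)%N) // exprM !sqr_coef.
case: (boolP (i %% 4 == 0)%N) => /eqP H.
  have -> : (i %% 2 == 0)%N by apply/eqP; lia.
  have -> : (i %/ 2 %% 2 == 0)%N by apply/eqP; lia.
  by have -> : (i %/ 2 %/ 2 = i %/ 4)%N by lia.
case: (boolP (i %% 2 == 0)%N) => /eqP H2 //.
have -> // : (i %/ 2 %% 2 == 0)%N = false by apply/eqP; lia.
Qed.

Close Scope ring_scope.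

Open Scope ring_scope.

Lemma s2_ext n d : s2 n = (\sum_(i < n + d) ((n %/ 2 ^ i) %% 2))%N.
Proof.
elim: d => [|d IH]; first by rewrite addn0.
rewrite addnS big_ord_recr /= -IH divn_small ?mod0n ?addn0 //.
apply: leq_trans (ltn_expl _ (isT : 1 < 2)%N) _; rewrite leq_exp2l //; lia.
Qed.

Lemma s2_ge n K : (n <= K)%N -> s2 n = (\sum_(i < K) ((n %/ 2 ^ i) %% 2))%N.
Proof. by move=> H; rewrite (s2_ext n (K - n)) subnKC. Qed.

Lemma s2_double n : s2 (2 * n) = s2 n.
Proof.
rewrite (s2_ge (2 * n) (2 * n).+1) ?leqnSn // big_ord_recl /=.
rewrite expn0 divn1 (_ : (2 * n) %% 2 = 0)%N; last by lia.
rewrite add0n (s2_ge n (2 * n)); last by lia.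
apply: eq_bigr => i _; rewrite /bump /= expnS divnMA.
by rewrite (_ : (2 * n) %/ 2 = n)%N; last by lia.
Qed.

Lemma s2_odd n : s2 (2 * n).+1 = (s2 n).+1.
Proof.
rewrite (s2_ge (2 * n).+1 (2 * n).+1) ?leqnn // big_ord_recl /=.
rewrite expn0 divn1 (_ : (2 * n).+1 %% 2 = 1)%N; last by lia.
rewrite add1n (s2_ge n (2 * n)); last by lia.
congr S; apply: eq_bigr => i _; rewrite /bump /= expnS divnMA.
by rewrite (_ : (2 * n).+1 %/ 2 = n)%N; last by lia.
Qed.

Definition tt (n : nat) : 'F_2 := (tm n)%:R.

Lemma tt_double n : tt (2 * n) = tt n.
Proof. by rewrite /tt /tm s2_double. Qed.

Lemma tt_odd n : tt (2 * n).+1 = 1 + tt n.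
Proof. by rewrite /tt /tm s2_odd !F2_mod2 mulrS. Qed.

Lemma tt0 : tt 0 = 0.
Proof. by rewrite /tt /tm /s2 big_ord0. Qed.

Lemma Fser_tt n : Fser n = tt n.
Proof. by rewrite /Fser; case: n => [|n] /=; rewrite ?tt0. Qed.

Close Scope ring_scope.

Open Scope ring_scope.

Lemma sq_even (p : {poly 'F_2}) k : (p ^+ 2)`_(2 * k) = p`_k.
Proof.
rewrite sqr_coef (_ : (2 * k) %% 2 = 0)%N; last by lia.
by rewrite (_ : (2 * k) %/ 2 = k)%N; last by lia.
Qed.

Lemma sq_odd (p : {poly 'F_2}) k : (p ^+ 2)`_((2 * k).+1) = 0.
Proof. by rewrite sqr_coef (_ : ((2 * k).+1 %% 2 == 0)%N = false) //; apply/eqP; lia. Qed.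

Lemma f_coef N j : (j <= N)%N -> (trunc N Fser)`_j = tt j.
Proof. by move=> H; rewrite coef_trunc H Fser_tt. Qed.

Lemma even_or_odd j : exists k, j = (2 * k)%N \/ j = (2 * k).+1.
Proof. exists (j %/ 2)%N; lia. Qed.

Lemma Qd_cong N :
  cong N ((1 + 'X) ^+ 3 * (trunc N Fser) ^+ 2 + (1 + 'X) ^+ 2 * trunc N Fser + 'X) 0.
Proof.
set f := trunc N Fser; set s := f ^+ 2.
have -> : (1 + 'X) ^+ 3 * s + (1 + 'X) ^+ 2 * f + 'X =
   s + s * 'X^1 + s * 'X^2 + s * 'X^3 + f + f * 'X^2 + 'X.
  transitivity (s + s * 'X^1 + s * 'X^2 + s * 'X^3 + f + f * 'X^2 + 'X
     + 2%:R * (s * 'X + s * 'X^2 + f * 'X)); last by rewrite P2_two mul0r addr0.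
  ring.
move=> i Hi; rewrite coef0 !coefD !coefMXn coefX.
have sq0 : (f ^+ 2)`_0 = f`_0 by move: (sq_even f 0); rewrite muln0.
have sq1 : (f ^+ 2)`_1 = 0 by move: (sq_odd f 0); rewrite muln0.
have tt1 : tt 1 = 1 by move: (tt_odd 0); rewrite muln0 tt0 addr0.
rewrite /s; case: i Hi => [|[|j]] Hi /=.
- by rewrite sq0 !addr0 F2_xx.
- rewrite subnn sq0 sq1 !f_coef //.
  by rewrite add0r !addr0 tt0 add0r tt1; apply/eqP.
- rewrite !subSS !subn0 addr0.
  case: (even_or_odd j) => k [] Ej; rewrite Ej.
  + rewrite (_ : (2 * k).+2 = 2 * k.+1)%N; last by lia.
    rewrite sq_even sq_odd sq_even !f_coef; try lia.
    rewrite (_ : (if _ then _ else _) = 0); last first.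
      case: ifP => // /negbT H; rewrite (_ : (2 * k - 1 = (2 * k.-1).+1)%N) ?sq_odd //; lia.
    rewrite !tt_double; move: (tt k) (tt k.+1) => a b.
    by case: (F2_cases a) => ->; case: (F2_cases b) => ->; apply/eqP.
  + rewrite (_ : (2 * k).+3 = (2 * k.+1).+1)%N; last by lia.
    rewrite (_ : (2 * k).+2 = 2 * k.+1)%N; last by lia.
    rewrite (_ : ((2 * k.+1).+1 < 3)%N = false); last by lia.
    rewrite (_ : ((2 * k).+1 - 1 = 2 * k)%N); last by lia.
    rewrite !sq_odd !sq_even !f_coef; try lia.
    rewrite !tt_odd; move: (tt k) (tt k.+1) => a b.
    by case: (F2_cases a) => ->; case: (F2_cases b) => ->; apply/eqP.
Qed.

Close Scope ring_scope.

Open Scope ring_scope.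

Lemma comp1 (q : {poly 'F_2}) : 1 \Po q = 1.
Proof. by rewrite -polyC1 comp_polyC. Qed.

Lemma cong_eval N p q i : cong N p q -> (i <= N)%N -> p`_i = q`_i.
Proof. by move=> H Hi; apply: H. Qed.

Lemma F2_eq (a b : 'F_2) : a + b = 0 -> a = b.
Proof. by case: (F2_cases a) => ->; case: (F2_cases b) => -> //; move/eqP. Qed.

Lemma G_rec (G : series) : comp_inverse Fser G -> forall n,
  G n.+1 = G n + (n == 0)%N%:R + (n.+1 %% 4 == 3)%N%:R * ((n == 2)%N%:R + G (n.+1 %/ 4)%N).
Proof.
move=> [G0 [HFG _]] n.
set N := n.+1; set f := trunc N Fser; set g := trunc N G.
have g0 : g`_0 = 0 by rewrite coef_trunc G0.
have gc : forall j, (j <= N)%N -> g`_j = G j by move=> j Hj; rewrite coef_trunc Hj.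
have H1 : cong N (f \Po g) 'X.
  move=> i Hi; have -> : 'X`_i = Xser i by rewrite coefX /Xser; case: (i == 1%N).
  rewrite -HFG compE.
  apply: (@cong_eval i); last exact: leqnn.
  apply: (@cong_trans _ _ (trunc i Fser \Po g)).
    apply: cong_comp_l => //; apply: cong_sym; exact: cong_trunc.
  apply: cong_comp_r; apply: cong_sym; exact: cong_trunc.
have H2 := @cong0_comp N _ _ g0 (Qd_cong N).
rewrite -/f !comp_polyD (comp_polyM ((1 + 'X) ^+ 3)) (comp_polyM ((1 + 'X) ^+ 2)) !comp_exp comp_polyD comp1 comp_polyX in H2.
set h := 1 + g.
have HQ : cong N (h ^+ 3 * 'X ^+ 2 + h ^+ 2 * 'X + g) 0.
  apply: (@cong_trans N _ _ _ _ H2); have H1' := @cong_sym N _ _ H1.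
  apply: congD; last exact: cong_refl.
  apply: congD; apply: congM; try exact: cong_refl; try exact: H1'; exact: congX.
have HR : cong N (h ^+ 4 * 'X^3 + h * 'X + g) 0.
  have -> : h ^+ 4 * 'X^3 + h * 'X + g =
     (h ^+ 3 * 'X ^+ 2 + h ^+ 2 * 'X + g) * (1 + h * 'X)
       - 2%:R * (h ^+ 3 * 'X ^+ 2 + h * g * 'X).
    rewrite /h; ring.
  rewrite P2_two mul0r subr0 -(mul0r (1 + h * 'X)).
  by apply: congM.
have := HR N (leqnn _).
rewrite coef0 !coefD coefMXn coefMX quad_coef.
move/F2_eq; rewrite gc // => E; rewrite -E /h /N /= !coefD !coef1 !gc //; last by lia.
case: (ltnP n.+1 3) => HN.
  rewrite (_ : (n.+1 %% 4 == 3)%N = false); last by apply/eqP; lia.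
  by rewrite [false%:R]/= mulr0n mul0r addr0 add0r addrC.
case: (boolP (n.+1 %% 4 == 3)%N) => /eqP H.
  rewrite (_ : ((n.+1 - 3) %% 4 == 0)%N = true); last by apply/eqP; lia.
  rewrite (_ : ((n.+1 - 3) %/ 4 = n.+1 %/ 4)%N); last by lia.
  rewrite (_ : ((n.+1 %/ 4) == 0)%N = (n == 2)%N); last by apply/eqP/eqP; lia.
  rewrite [true%:R]/= mulr1n mul1r; ring.
rewrite (_ : ((n.+1 - 3) %% 4 == 0)%N = false); last by apply/eqP; lia.
by rewrite [false%:R]/= mulr0n mul0r addr0 add0r addrC.
Qed.

Close Scope ring_scope.


Fixpoint Df (k m : nat) : nat := if k is k'.+1 then 4 * Df k' (m %/ 2) + 2 * (m %% 2) else 0.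
Definition D m := Df m m.

Lemma Df0 k : Df k 0 = 0.
Proof. by elim: k => //= k ->. Qed.

Lemma Df_fuel k k' m : m <= k -> m <= k' -> Df k m = Df k' m.
Proof.
elim: k k' m => [|k IH] [|k'] m /= H1 H2.
- by [].
- have -> : m = 0 by lia.
  by rewrite /= Df0.
- have -> : m = 0 by lia.
  by rewrite /= Df0.
- rewrite (IH k'); lia.
Qed.

Lemma D_step m : D m = 4 * D (m %/ 2) + 2 * (m %% 2).
Proof.
rewrite /D (Df_fuel m m.+1 m) // /=.
by rewrite (Df_fuel m (m %/ 2) (m %/ 2)) //; lia.
Qed.

Lemma D0 : D 0 = 0. Proof. by []. Qed.

Lemma D_even m : D (2 * m) = 4 * D m.
Proof. rewrite D_step; have -> : (2 * m) %/ 2 = m by lia. have -> : (2 * m) %% 2 = 0 by lia. lia. Qed.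

Lemma D_odd m : D (2 * m).+1 = 4 * D m + 2.
Proof. rewrite D_step; have -> : (2 * m).+1 %/ 2 = m by lia. have -> : (2 * m).+1 %% 2 = 1 by lia. lia. Qed.

Lemma D_ge m : m <= D m.
Proof.
elim/ltn_ind: m => m IH; rewrite D_step.
case: m IH => [|m] IH //.
have := IH (m.+1 %/ 2) ltac:(lia); lia.
Qed.

Lemma D_mod m : D m %% 2 = 0.
Proof. rewrite D_step; lia. Qed.

Definition inD y := has (fun m => D m == y) (iota 0 y.+1).

Lemma inDP y : reflect (exists m, D m = y) (inD y).
Proof.
apply: (iffP hasP) => [[m _ /eqP <-]|[m <-]]; first by exists m.
exists m => //; rewrite mem_iota add0n ltnS; exact: D_ge.
Qed.

Lemma inD_4 q : inD (4 * q) = inD q.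
Proof.
apply/inDP/inDP => [[m Hm]|[m Hm]].
  exists (m %/ 2); move: Hm; rewrite D_step; lia.
by exists (2 * m); rewrite D_even Hm.
Qed.

Lemma inD_42 q : inD (4 * q).+2 = inD q.
Proof.
apply/inDP/inDP => [[m Hm]|[m Hm]].
  exists (m %/ 2); move: Hm; rewrite D_step; lia.
by exists (2 * m).+1; rewrite D_odd Hm; lia.
Qed.

Lemma inD_41 q : inD (4 * q).+1 = false.
Proof. apply/inDP => [[m Hm]]; have := D_mod m; lia. Qed.

Lemma inD_43 q : inD (4 * q).+3 = false.
Proof. apply/inDP => [[m Hm]]; have := D_mod m; lia. Qed.

Lemma inD0 : inD 0. Proof. by apply/inDP; exists 0. Qed.
Lemma inD1 : inD 1 = false. Proof. exact: (inD_41 0). Qed.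

Lemma inD_par y : inD y -> inD y.+1 = false.
Proof.
move/inDP => [m Hm]; apply/inDP => [[m' Hm']].
have := D_mod m; have := D_mod m'; lia.
Qed.

Definition c y := ((0 < y) && inD y) || inD y.+1.

Lemma c_rec n : c n.+1 = c n (+) (n == 0) (+) ((n.+1 %% 4 == 3) && ((n == 2) (+) c (n.+1 %/ 4))).
Proof.
have [q [r [Hr ->]]] : exists q r, r < 4 /\ n = 4 * q + r.
  by exists (n %/ 4), (n %% 4); split; lia.
case: r Hr => [|[|[|[|r]]]] // _.
- rewrite addn0 (_ : ((4 * q).+1 %% 4 == 3) = false); last by apply/eqP; lia.
  rewrite andFb addbF /c inD_41 inD_42 inD_4 andbF orbF.
  rewrite (_ : (4 * q == 0) = (q == 0)); last by apply/eqP/eqP; lia.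
  rewrite (_ : (0 < 4 * q) = (0 < q)); last by lia.
  case: q => [|q]; first by rewrite inD0.
  by rewrite /= addbF.
- rewrite addn1 (_ : ((4 * q).+2 %% 4 == 3) = false); last by apply/eqP; lia.
  rewrite andFb addbF (_ : ((4 * q).+1 == 0) = false) // addbF.
  by rewrite /c inD_42 inD_43 inD_41 !orbF.
- rewrite addn2 (_ : ((4 * q).+3 %% 4 == 3) = true); last by apply/eqP; lia.
  rewrite (_ : ((4 * q).+2 == 0) = false) // addbF andTb.
  rewrite (_ : ((4 * q).+2 == 2) = (q == 0)); last by apply/eqP/eqP; lia.
  rewrite (_ : (4 * q).+3 %/ 4 = q); last by lia.
  rewrite /c inD_43 inD_42 (_ : (4 * q).+4 = 4 * q.+1); last by lia.
  rewrite inD_4 andbF orbF /=.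
  case: q => [|q] /=; first by rewrite inD1.
  case E: (inD q.+1); first by rewrite inD_par.
  by [].
- rewrite addn3 (_ : ((4 * q).+4 %% 4 == 3) = false); last by apply/eqP; lia.
  rewrite andFb addbF (_ : ((4 * q).+3 == 0) = false) // addbF.
  rewrite /c inD_43 (_ : (4 * q).+4 = 4 * q.+1); last by lia.
  rewrite inD_41 inD_4 /=.
  by rewrite orbF.
Qed.

Open Scope ring_scope.

Lemma b2R_xor (a b : bool) : (((a (+) b) : nat)%:R : 'F_2) = (a : nat)%:R + (b : nat)%:R.
Proof. by case: a; case: b; apply/eqP. Qed.
Lemma b2R_and (a b : bool) : (((a && b) : nat)%:R : 'F_2) = (a : nat)%:R * (b : nat)%:R.
Proof. by case: a; case: b; apply/eqP. Qed.

Lemma G_c (G : series) : comp_inverse Fser G -> forall n, G n = (c n : nat)%:R.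
Proof.
move=> HG n; elim/ltn_ind: n => n IH.
case: n IH => [|n] IH.
  by case: HG => -> _; rewrite /c /=.
rewrite (G_rec G HG) c_rec !b2R_xor b2R_and IH // IH; last by lia.
by rewrite b2R_xor.
Qed.

Close Scope ring_scope.


Lemma logn2_odd x : odd x -> logn 2 x = 0.
Proof. by move=> H; rewrite lognE dvdn2 H !andbF. Qed.

Lemma logn2_double x : 0 < x -> logn 2 (2 * x) = (logn 2 x).+1.
Proof.
move=> H; rewrite lognE (_ : 0 < 2 * x) ?dvdn_mulr //; last by lia.
by rewrite (_ : (2 * x) %/ 2 = x) //; lia.
Qed.

Lemma logn_char j x : 0 < x -> (logn 2 x = j <-> exists k, x = 2 ^ j * (2 * k + 1)).
Proof.
elim: j x => [|j IH] x Hx; case Ho: (odd x).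
- rewrite logn2_odd //; split => // _; exists (x %/ 2); have := modn2 x; rewrite Ho /=; lia.
- have Ex : x = 2 * (x %/ 2) by have := modn2 x; rewrite Ho /=; lia.
  rewrite Ex logn2_double; last by lia.
  split => // [[k Hk]]; have := modn2 x; rewrite Ho /=; lia.
- rewrite logn2_odd //; split => // [[k Hk]]; move: Hk; rewrite expnS -mulnA => Hk.
  have := modn2 x; rewrite Ho /=; lia.
- have Ex : x = 2 * (x %/ 2) by have := modn2 x; rewrite Ho /=; lia.
  rewrite Ex logn2_double; last by lia.
  have Hy : 0 < x %/ 2 by lia.
  split.
    case => /(IH _ Hy) [k Hk]; exists k; rewrite expnS -mulnA -Hk; lia.
  case=> k; rewrite expnS -mulnA => Hk.
  have : x %/ 2 = 2 ^ j * (2 * k + 1) by lia.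
  by move=> E; congr S; apply/(IH _ Hy); exists k.
Qed.

Definition A n := if odd n then D (n.+1 %/ 2) - 1 else D (n %/ 2).

Lemma A_even m : A (2 * m) = D m.
Proof. by rewrite /A oddM /= (_ : (2 * m) %/ 2 = m) //; lia. Qed.

Lemma A_odd m : A (2 * m).+1 = D m.+1 - 1.
Proof. by rewrite /A /= oddM /= (_ : (2 * m).+2 %/ 2 = m.+1) //; lia. Qed.

Lemma D_gap m : 3 * D m.+1 = 3 * D m + 4 ^ (logn 2 m.+1).+1 + 2.
Proof.
elim/ltn_ind: m => m IH.
case: (even_or_odd m) => p [] Em.
  rewrite Em D_even D_odd logn2_odd /=; last by rewrite oddM.
  rewrite expn1; lia.
have IHp := IH p ltac:(lia).
rewrite Em (_ : (2 * p).+2 = 2 * p.+1) ?D_even ?D_odd ?logn2_double //; try lia.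
rewrite (expnS 4 (logn 2 p.+1).+1); lia.
Qed.

Lemma pow_ge k : 4 <= 4 ^ k.+1.
Proof. by rewrite expnS; have := expn_gt0 4 k; lia. Qed.

Lemma D_incr m : D m + 2 <= D m.+1.
Proof. have := D_gap m; have := pow_ge (logn 2 m.+1); lia. Qed.

Lemma A_incr n : A n < A n.+1.
Proof.
case: (even_or_odd n) => m [] ->.
  rewrite A_even A_odd; have := D_incr m; lia.
rewrite (_ : (2 * m).+2 = 2 * m.+1); last by lia.
rewrite A_even A_odd; have := D_incr m; lia.
Qed.

Lemma gapE m : A (2 * m).+2 - A (2 * m).+1 = 1.
Proof.
rewrite (_ : (2 * m).+2 = 2 * m.+1); last by lia.
rewrite A_even A_odd; have := D_incr m; lia.
Qed.

Lemma gapO m : 3 * (A (2 * m).+1 - A (2 * m)) = 4 ^ (logn 2 m.+1).+1 - 1.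
Proof.
rewrite A_even A_odd; have := D_gap m; have := D_incr m; have := pow_ge (logn 2 m.+1); lia.
Qed.

Lemma gv_spec m : 3 * ((4 ^ m - 1) %/ 3) = 4 ^ m - 1.
Proof.
have [t Ht] : exists t, 4 ^ m = 3 * t + 1.
  elim: m => [|m [t Ht]]; first by exists 0.
  by exists (4 * t + 1); rewrite expnS Ht; lia.
rewrite Ht; lia.
Qed.

Lemma incr_lt (s : nat -> nat) : (forall n, s n < s n.+1) -> forall i j, i < j -> s i < s j.
Proof.
move=> H i j; elim: j => [|j IH] //; rewrite ltnS leq_eqVlt => /orP [/eqP ->|/IH] //.
by move=> h; apply: ltn_trans h (H j).
Qed.

Lemma enum_unique (s t : nat -> nat) : s 0 = t 0 ->
  (forall n, s n < s n.+1) -> (forall n, t n < t n.+1) ->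
  (forall m, 1 <= m -> ((exists2 n, 1 <= n & s n = m) <-> (exists2 n, 1 <= n & t n = m))) ->
  forall n, s n = t n.
Proof.
move=> H0 Hs Ht Hst; elim=> [|n IH] //.
have [j Hj Etj] : exists2 j, 1 <= j & t j = s n.+1.
  apply/Hst; [have := Hs n; lia | by exists n.+1].
have [i Hi Esi] : exists2 i, 1 <= i & s i = t n.+1.
  apply/Hst; [have := Ht n; lia | by exists n.+1].
have Hjn : n < j.
  rewrite ltnNge; apply/negP => Hjn.
  have : t j <= t n.
    move: Hjn; rewrite leq_eqVlt => /orP [/eqP ->|/(incr_lt _ Ht _ _)]; [by []|lia].
  have := Hs n; lia.
have Hin : n < i.
  rewrite ltnNge; apply/negP => Hin.
  have : s i <= s n.
    move: Hin; rewrite leq_eqVlt => /orP [/eqP ->|/(incr_lt _ Hs _ _)]; [by []|lia].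
  have := Ht n; lia.
have h1 : t n.+1 <= t j.
  move: Hjn; rewrite -ltnS ltnS leq_eqVlt => /orP [/eqP <-|/(incr_lt _ Ht _ _)]; [by []|lia].
have h2 : s n.+1 <= s i.
  move: Hin; rewrite -ltnS ltnS leq_eqVlt => /orP [/eqP <-|/(incr_lt _ Hs _ _)]; [by []|lia].
lia.
Qed.


Lemma cA y : 1 <= y -> (c y <-> exists2 n, 1 <= n & A n = y).
Proof.
move=> Hy; rewrite /c; split.
  case/orP => [/andP [_ /inDP [m Hm]]|/inDP [m Hm]].
    have Hm1 : 0 < m by case: m Hm => [|m] //; rewrite D0; lia.
    by exists (2 * m); [lia | rewrite A_even].
  have Hm1 : 0 < m by case: m Hm => [|m] //; rewrite D0; lia.
  exists (2 * m.-1).+1 => //; rewrite A_odd prednK //; lia.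
case=> n _ En; rewrite -En in Hy *; case: (even_or_odd n) => m [] En'; rewrite En' in Hy *.
  rewrite A_even; apply/orP; left; apply/andP; split; last by apply/inDP; exists m.
  by move: Hy; rewrite A_even.
rewrite A_odd; apply/orP; right; apply/inDP; exists m.+1.
have := D_incr m; lia.
Qed.

Lemma nsplit n : 1 <= n -> exists m, n = (2 * m).+1 \/ n = (2 * m).+2.
Proof. move=> H; exists (n.-1 %/ 2); lia. Qed.

Lemma A0 : A 0 = 0. Proof. by []. Qed.

Lemma A_ge n : n <= A n.
Proof. elim: n => [|n IH] //; have := A_incr n; lia. Qed.

Lemma F2_b1 (b : bool) : ((b : nat)%:R = 1 :> 'F_2)%R <-> b.
Proof. by case: b; split => //; move/eqP; rewrite eq_sym (negbTE F2_10). Qed.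

Lemma mainTheorem7_aux (G : series) :
  comp_inverse Fser G ->
  (forall N : nat, exists2 m : nat, (N < m)%N & G m = 1%R) /\
  (forall a : nat -> nat, enumerates G a ->
     ((forall n, (1 <= n)%N ->
         exists2 m, (1 <= m)%N & (a n - a n.-1)%N = ((4 ^ m - 1) %/ 3)%N) /\
      (forall m, (1 <= m)%N ->
         exists2 n, (1 <= n)%N & (a n - a n.-1)%N = ((4 ^ m - 1) %/ 3)%N)) /\
     (forall n, (1 <= n)%N ->
         ((a n - a n.-1)%N = 1%N <-> (n %% 4 \in [:: 0; 1; 2])%N)) /\
     (forall m n, (2 <= m)%N -> (1 <= n)%N ->
         ((a n - a n.-1)%N = ((4 ^ m - 1) %/ 3)%N <->
          exists k : nat, n = (2 ^ m.+1 * k + 2 ^ m - 1)%N))).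
Proof.
move=> HG; have Gc := G_c G HG.
have GP : forall m, G m = 1%R <-> c m by move=> m; rewrite Gc F2_b1.
split.
  move=> N; exists (A N.+1); first by have := A_ge N.+1; lia.
  by apply/GP/cA; [have := A_ge N.+1; lia | exists N.+1].
move=> a [a0 [ainc aenum]].
have aA : forall n, a n = A n.
  apply: enum_unique => //; first exact: A_incr.
  by move=> m Hm; rewrite -aenum // GP; exact: cA.
split; [split|split].
- move=> n Hn; rewrite !aA; case: (nsplit n Hn) => m [] -> /=.
    exists (logn 2 m.+1).+1 => //.
    have := gapO m; have := gv_spec (logn 2 m.+1).+1; lia.
  by exists 1 => //; rewrite gapE.
- case=> [|j] // _; exists (2 * (2 ^ j - 1)).+1 => //; rewrite !aA /=.
  have := gapO (2 ^ j - 1).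
  rewrite (_ : (2 ^ j - 1).+1 = 2 ^ j) ?pfactorK //; last by have := expn_gt0 2 j; lia.
  have := gv_spec j.+1; lia.
- move=> n Hn; rewrite !aA; case: (nsplit n Hn) => m [] -> /=; last first.
    rewrite gapE !inE; split => // _; lia.
  have H := gapO m; have Hp := pow_ge (logn 2 m.+1).
  have E1 : A (2 * m).+1 - A (2 * m) = 1 <-> logn 2 m.+1 = 0.
    split => [Hg|Hk0]; last by rewrite Hk0 expn1 in H; lia.
    have : 4 ^ (logn 2 m.+1).+1 = 4 ^ 1 by lia.
    by move/eqP; rewrite eqn_exp2l //; move/eqP => [].
  rewrite E1 logn_char //; split => [[k Hk]|Hm].
    rewrite expn0 mul1n in Hk; rewrite !inE; lia.
  exists (m %/ 2); rewrite expn0 mul1n; move: Hm; rewrite !inE; lia.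
- move=> m n Hm Hn; rewrite !aA; case: m Hm => [|[|m0]] // _.
  case: (nsplit n Hn) => m [] -> /=; last first.
    rewrite gapE; have := gv_spec m0.+2; have := pow_ge m0.+1.
    rewrite !expnS => h1 h2; split => [h3|[k Hk]]; exfalso; lia.
  have H := gapO m; have Hp := pow_ge (logn 2 m.+1); have G2 := gv_spec m0.+2.
  have Hp2 := pow_ge m0.+1.
  have E1 : A (2 * m).+1 - A (2 * m) = (4 ^ m0.+2 - 1) %/ 3 <-> logn 2 m.+1 = m0.+1.
    split => [Hg|Hk0]; last by rewrite Hk0 in H; lia.
    have : 4 ^ (logn 2 m.+1).+1 = 4 ^ m0.+2 by lia.
    by move/eqP; rewrite eqn_exp2l //; move/eqP => [].
  rewrite E1 logn_char //; split => [[k Hk]|[k Hk]]; exists k; move: Hk; rewrite !expnS; lia.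
Qed.

Open Scope ring_scope.
Theorem mainTheorem7 (G : series) :
  comp_inverse Fser G ->
  (* the set {m >= 1 : c_m = 1} is infinite, so the enumeration a exists *)
  (forall N : nat, exists2 m : nat, (N < m)%N & G m = 1) /\
  (forall a : nat -> nat, enumerates G a ->
     ((forall n, (1 <= n)%N ->
         exists2 m, (1 <= m)%N & (a n - a n.-1)%N = ((4 ^ m - 1) %/ 3)%N) /\
      (forall m, (1 <= m)%N ->
         exists2 n, (1 <= n)%N & (a n - a n.-1)%N = ((4 ^ m - 1) %/ 3)%N)) /\
     (forall n, (1 <= n)%N ->
         ((a n - a n.-1)%N = 1%N <-> (n %% 4 \in [:: 0; 1; 2])%N)) /\
     (forall m n, (2 <= m)%N -> (1 <= n)%N ->
         ((a n - a n.-1)%N = ((4 ^ m - 1) %/ 3)%N <->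
          exists k : nat, n = (2 ^ m.+1 * k + 2 ^ m - 1)%N))).
exact: mainTheorem7_aux.
Qed.
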